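(* Let $p\ge1$, $\phi_1,\dots,\phi_p:\mathbb Z\to\mathbb C$, integers $t>s$ and $1\le m\le p$. Then $$\xi^{(m)}_{t,s}=\sum_{j=1}^{p-m+1}\phi_{m+j-1}(s+j)\,\xi_{t,s+j}.$$
   Context: Convention: $\phi_l(t)=0$ for $l>p$. For integers $t>u$ and $1\le m\le p$, $\Phi^{(m)}_{t,u}$ is the $(t-u)\times(t-u)$ lower Hessenberg matrix whose $(i,j)$ entry is: $\phi_{m+i-1}(u+i)$ if $j=1$; $-1$ if $j=i+1$; $\phi_{i-j+1}(u+i)$ if $2\le j\le i$; $0$ if $j>i+1$. For $t\ge u-p+1$: $\xi^{(m)}_{t,u}=\det\Phi^{(m)}_{t,u}$ if $t>u$; $\xi^{(m)}_{t,u}=1$ if $t=u-m+1$; $\xi^{(m)}_{t,u}=0$ if $u-p+1\le t\le u$, $t\ne u-m+1$. The principal determinant is $\xi_{t,u}=\xi^{(1)}_{t,u}$ (so $\xi_{u,u}=1$ and $\xi_{t,u}=0$ for $u-p+1\le t<u$). *)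

(* Defs.v *)
From HB Require Import structures.
From mathcomp Require Import all_boot all_order all_algebra.
From mathcomp Require Import complex.
From mathcomp Require Import reals.
Set Implicit Arguments. Unset Strict Implicit. Unset Printing Implicit Defensive.
Import Order.TTheory GRing.Theory Num.Theory.
Local Open Scope ring_scope.

(* Coefficient functions phi_1..phi_p : Z -> C, given as phi : nat -> int -> C
   (only indices 1..p are used).  Convention: phi_l = 0 for l > p
   (and index 0 never occurs, we also set it to 0). *)
Definition phiE (C : nzRingType) (p : nat) (phi : nat -> int -> C) (l : nat) (t : int) : C :=
  if (1 <= l <= p)%N then phi l t else 0.

(* The (n x n) lower Hessenberg matrix Phi^{(m)}_{t,u} with n = t - u,
   written with 0-based indices i, j (the paper's indices are i+1, j+1):
   entry (i+1, j+1) is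
     phi_{m+i}(u+i+1)        if j+1 = 1
     -1                      if j+1 = i+2
     phi_{i-j+1}(u+i+1)      if 2 <= j+1 <= i+1
     0                       if j+1 > i+2. *)
Definition PhiMx (C : nzRingType) (p : nat) (phi : nat -> int -> C) (m n : nat) (u : int)
  : 'M[C]_n :=
  \matrix_(i < n, j < n)
    if (j == 0%N :> nat) then phiE p phi (m + i) (u + (i.+1)%:Z)
    else if (j == i.+1 :> nat) then -1
    else if (j <= i)%N then phiE p phi (i - j).+1 (u + (i.+1)%:Z)
    else 0.

(* xi^{(m)}_{t,u}: det Phi^{(m)}_{t,u} if t > u; 1 if t = u - m + 1;
   0 otherwise (the paper only defines it for t >= u - p + 1, where the
   "otherwise" case is exactly u-p+1 <= t <= u, t <> u-m+1). *)
Definition xi (C : comNzRingType) (p : nat) (phi : nat -> int -> C) (m : nat) (t u : int) : C :=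
  if u < t then \det (PhiMx p phi m `|t - u|%N u)
  else if t == u - m%:Z + 1 then 1 else 0.

(* Main.v *)
Require Import Defs.
From HB Require Import structures.
From mathcomp Require Import all_boot all_order all_algebra.
From mathcomp Require Import complex.
From mathcomp Require Import reals.
From mathcomp Require Import zify ring.
Import Order.TTheory GRing.Theory Num.Theory.
Local Open Scope ring_scope.

Section S.
Variables (C : comNzRingType) (p : nat) (phi : nat -> int -> C).

Lemma D1 m u : \det (PhiMx p phi m 1 u) = phiE p phi m (u + 1).
Proof. by rewrite (expand_det_row _ ord0) big_ord1 /cofactor det_mx00 !mxE /= addn0 expr0 !mulr1. Qed.

Lemma Drec m k u : \det (PhiMx p phi m k.+2 u) =
  phiE p phi m (u + 1) * \det (PhiMx p phi 1 k.+1 (u + 1))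
  + \det (PhiMx p phi m.+1 k.+1 (u + 1)).
Proof.
rewrite (expand_det_row _ ord0) !big_ord_recl big1 ?addr0; last first.
  move=> i _; rewrite !mxE /=; by rewrite mul0r.
rewrite /cofactor !mxE /= addn0 expr0 mul1r expr1 mulNr mulN1r opprK mul1r.
congr (_ * _ + _).
- congr (\det _); apply/matrixP => i j; rewrite !mxE /= /bump /= !add1n.
  have -> : u + (i.+2)%:Z = u + 1 + (i.+1)%:Z by lia.
  case: j => [[|jj] Hj] /=; first by rewrite subn1.
  by rewrite !eqSS ltnS subSS.
- congr (\det _); apply/matrixP => i j; rewrite !mxE /= /bump /= add1n.
  have -> : u + (i.+2)%:Z = u + 1 + (i.+1)%:Z by lia.
  case: j => [[|j'] Hj] /=; rewrite !add1n; first by rewrite addnS addSn.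
  by rewrite !eqSS ltnS subSS.
Qed.

Lemma Dsum n m u : \det (PhiMx p phi m n.+1 u) =
  \sum_(i < n.+1) phiE p phi (m + i) (u + (i.+1)%:Z) * \det (PhiMx p phi 1 (n - i) (u + (i.+1)%:Z)).
Proof.
elim: n m u => [|n IH] m u.
  by rewrite D1 big_ord1 /= det_mx00 mulr1 addn0.
rewrite Drec (IH m.+1) [RHS]big_ord_recl /= addn0 subn0; congr (_ + _).
apply: eq_bigr => i _; rewrite /= /bump /= add1n subSS addnS addSn.
by have -> : u + 1 + (i.+1)%:Z = u + (i.+2)%:Z by lia.
Qed.
End S.

Lemma sum_ext (C : nzRingType) (F : nat -> C) a b : (a <= b)%N ->
  (forall j, (a < j)%N -> F j = 0) ->
  \sum_(1 <= j < a.+1) F j = \sum_(1 <= j < b.+1) F j.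
Proof.
move=> hab h0; rewrite [RHS](big_cat_nat _ (n:=a.+1)) //=.
rewrite [X in _ = _ + X]big1_seq ?addr0 // => j /andP[_]; rewrite mem_index_iota => /andP[hj _]; exact: h0.
Qed.

Theorem proposition4 (R : realType) (p : nat) (phi : nat -> int -> R[i])
    (t s : int) (m : nat) :
  (1 <= p)%N -> s < t -> (1 <= m <= p)%N ->
  xi p phi m t s =
  \sum_(1 <= j < (p - m + 1).+1)
     phiE p phi (m + j - 1) (s + j%:Z) * xi p phi 1 t (s + j%:Z).
Proof.
move=> hp hst /andP[hm1 hmp].
have [k ->] : exists k : nat, t = s + (k.+1)%:Z.
  exists (`|t - s|%N).-1; lia.
set F := fun j : nat => phiE p phi (m + j - 1) (s + j%:Z) * xi p phi 1 (s + (k.+1)%:Z) (s + j%:Z).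
have hF1 : forall j, (p - m + 1 < j)%N -> F j = 0.
  move=> j hj; rewrite /F /phiE.
  have -> : (1 <= m + j - 1 <= p)%N = false by lia.
  by rewrite mul0r.
have hF2 : forall j, (k.+1 < j)%N -> F j = 0.
  move=> j hj; rewrite /F /xi.
  have -> : (s + j%:Z < s + (k.+1)%:Z) = false by apply/negbTE; rewrite -leNgt; lia.
  have -> : (s + (k.+1)%:Z == s + j%:Z - 1%:Z + 1) = false by apply/negbTE; apply/eqP; lia.
  by rewrite mulr0.
rewrite (@sum_ext _ F (p - m + 1) (maxn (k.+1) (p - m + 1)) _ hF1) ?leq_maxr //.
rewrite -(@sum_ext _ F (k.+1) (maxn (k.+1) (p - m + 1)) _ hF2) ?leq_maxl //.
rewrite /xi; have -> : (s < s + (k.+1)%:Z) = true by lia.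
have -> : absz (s + (k.+1)%:Z - s)%R = k.+1 by lia.
rewrite Dsum big_add1 /= big_mkord; apply: eq_bigr => i _.
rewrite /F; congr (_ * _).
  congr phiE; lia.
rewrite /xi; case: i => i /= hi.
have [hik|hik] := ltnP i k.
  have -> : (s + (i.+1)%:Z < s + (k.+1)%:Z) = true by lia.
  by have -> : absz (s + (k.+1)%:Z - (s + (i.+1)%:Z))%R = (k - i)%N by lia.
have hki : i = k by lia.
subst i.
have -> : (s + (k.+1)%:Z < s + (k.+1)%:Z) = false by lia.
have -> : (s + (k.+1)%:Z == s + (k.+1)%:Z - 1%:Z + 1) = true by apply/eqP; lia.
by rewrite subnn det_mx00.
Qed.
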